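(* Let $\nu>-1$ and $p,q\in\mathbb{R}$. Then the inequalities $$(1-p)\frac{1}{\mathcal{I}_{\nu+1}(x)}+p\frac{\mathcal{I}_{\nu}(x)}{\mathcal{I}_{\nu+1}(x)}>1>(1-q)\frac{1}{\mathcal{I}_{\nu+1}(x)}+q\frac{\mathcal{I}_{\nu}(x)}{\mathcal{I}_{\nu+1}(x)}$$ hold for all $x\in(0,\infty)$ if and only if $p\geq\frac{\nu+1}{\nu+2}$ and $q\leq 0$.
   Context: For $\mu>-1$, $I_\mu(x)=\sum_{n\geq0}\frac{(x/2)^{\mu+2n}}{n!\,\Gamma(\mu+n+1)}$ is the modified Bessel function of the first kind, and $\mathcal{I}_\mu:\mathbb{R}\to[1,\infty)$ is the normalized modified Bessel function $$\mathcal{I}_{\mu}(x)=2^{\mu}\Gamma(\mu+1)x^{-\mu}I_{\mu}(x)=\sum_{n\geq0}\frac{(1/4)^n}{(\mu+1)_n\, n!}x^{2n},$$ where $(\mu+1)_n=\Gamma(\mu+n+1)/\Gamma(\mu+1)$ is the Pochhammer symbol. In particular $\mathcal{I}_{-1/2}(x)=\cosh x$ and $\mathcal{I}_{1/2}(x)=\frac{\sinh x}{x}$. *)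

(* Defs.v *)
From Stdlib Require Import Reals Factorial ClassicalEpsilon.
Open Scope R_scope.

Fixpoint poch (a : R) (n : nat) : R :=
  match n with
  | O => 1
  | S k => poch a k * (a + INR k)
  end.

Definition nbessel_term (mu x : R) (n : nat) : R :=
  (/ 4) ^ n / (poch (mu + 1) n * INR (fact n)) * x ^ (2 * n).

(* Normalized modified Bessel function I_mu(x) = sum_{n>=0} nbessel_term mu x n
   (the series converges for every real x when mu > -1; the value is chosen
   as the sum of the series). *)
Definition nbessel (mu x : R) : R :=
  epsilon (inhabits 0) (fun l => infinite_sum (nbessel_term mu x) l).

(* Main.v *)
Require Import Defs.
From Stdlib Require Import Reals Factorial Lra Lia ZArith ClassicalEpsilon.
From Coquelicot Require Import Coquelicot.
Open Scope R_scope.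

Definition cf (mu : R) (n : nat) : R := (/ 4) ^ n / (poch (mu + 1) n * INR (fact n)).

Lemma poch_pos a n : 0 < a -> 0 < poch a n.
Proof.
  intro Ha; induction n as [|n IH]; simpl. lra.
  apply Rmult_lt_0_compat; auto. pose proof (pos_INR n); lra.
Qed.

Lemma cf_pos mu n : -1 < mu -> 0 < cf mu n.
Proof.
  intro H; unfold cf. apply Rdiv_lt_0_compat.
  apply pow_lt; lra.
  apply Rmult_lt_0_compat. apply poch_pos; lra. apply lt_0_INR, lt_O_fact.
Qed.

Lemma cf_0 mu : cf mu 0 = 1.
Proof. unfold cf; simpl; field. Qed.

Lemma cf_S mu n : -1 < mu ->
  cf mu (S n) = cf mu n * / (4 * ((mu + 1 + INR n) * INR (S n))).
Proof.
  intro H; unfold cf. simpl poch. rewrite fact_simpl, mult_INR.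
  pose proof (poch_pos (mu+1) n ltac:(lra)).
  pose proof (lt_0_INR _ (lt_O_fact n)).
  pose proof (pos_INR n). rewrite S_INR. simpl pow.
  field. repeat split; lra.
Qed.

Lemma poch_shift a n : a * poch (a + 1) n = poch a n * (a + INR n).
Proof.
  induction n as [|n IH]; cbn [poch]. simpl; ring.
  rewrite S_INR.
  replace (a * (poch (a + 1) n * (a + 1 + INR n))) with ((a * poch (a+1) n) * (a + 1 + INR n)) by ring.
  rewrite IH. ring.
Qed.

Lemma cf_shift nu n : -1 < nu ->
  cf (nu + 1) n = cf nu n * ((nu + 1) / (nu + 1 + INR n)).
Proof.
  intro H; unfold cf.
  pose proof (poch_shift (nu+1) n) as E.
  pose proof (poch_pos (nu+1) n ltac:(lra)).
  pose proof (poch_pos (nu+1+1) n ltac:(lra)).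
  pose proof (lt_0_INR _ (lt_O_fact n)).
  pose proof (pos_INR n).
  assert (poch (nu + 1 + 1) n = poch (nu+1) n * (nu + 1 + INR n) / (nu+1)) as E2.
  { rewrite <- E. field. lra. }
  rewrite E2. field. repeat split; lra.
Qed.

Lemma term_eq mu x n : nbessel_term mu x n = cf mu n * (x ^ 2) ^ n.
Proof. unfold nbessel_term, cf. rewrite pow_mult. reflexivity. Qed.

Lemma ex_ser mu y : -1 < mu -> 0 < y -> ex_series (fun n => cf mu n * y ^ n).
Proof.
  intros Hmu Hy.
  apply ex_series_Rabs.
  apply (ex_series_DAlembert _ 0). lra.
  { intro n. pose proof (cf_pos mu n Hmu). pose proof (pow_lt y n Hy).
    apply Rgt_not_eq. apply Rmult_lt_0_compat; auto. }
  apply is_lim_seq_le_le with (u := fun _ => 0)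
    (w := fun n => (y / (4 * (mu + 1))) * / INR (S n)).
  { intro n. rewrite cf_S by auto. simpl pow.
    pose proof (cf_pos mu n Hmu). pose proof (pow_lt y n Hy).
    pose proof (pos_INR n). rewrite S_INR.
    replace (cf mu n * / (4 * ((mu + 1 + INR n) * (INR n + 1))) * (y * y ^ n) / (cf mu n * y ^ n))
      with (y / (4 * ((mu + 1 + INR n) * (INR n + 1)))) by (field; repeat split; lra).
    rewrite Rabs_pos_eq.
    2:{ apply Rlt_le, Rdiv_lt_0_compat; auto. apply Rmult_lt_0_compat. lra. apply Rmult_lt_0_compat; lra. }
    split. apply Rlt_le, Rdiv_lt_0_compat; auto. apply Rmult_lt_0_compat. lra. apply Rmult_lt_0_compat; lra.
    unfold Rdiv. rewrite Rmult_assoc. apply Rmult_le_compat_l. lra.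
    rewrite <- Rinv_mult. apply Rinv_le_contravar.
    apply Rmult_lt_0_compat; lra.
    rewrite Rmult_assoc. apply Rmult_le_compat_l. lra.
    apply Rmult_le_compat_r. lra. lra. }
  apply is_lim_seq_const.
  replace (Finite 0) with (Rbar_mult (y / (4 * (mu + 1))) 0) by (simpl; f_equal; ring).
  apply is_lim_seq_scal_l.
  apply (is_lim_seq_incr_1 (fun n => / INR n)).
  replace (Finite 0) with (Rbar_inv p_infty) by reflexivity.
  apply is_lim_seq_inv. apply is_lim_seq_INR. discriminate.
Qed.

Lemma nbessel_eq mu x : -1 < mu -> 0 < x ->
  nbessel mu x = Series (fun n => cf mu n * (x ^ 2) ^ n).
Proof.
  intros Hmu Hx.
  assert (Hy : 0 < x ^ 2) by (apply pow_lt; auto).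
  pose proof (Series_correct _ (ex_ser mu (x^2) Hmu Hy)) as HS.
  assert (infinite_sum (nbessel_term mu x) (Series (fun n => cf mu n * (x ^ 2) ^ n))) as HI.
  { apply is_series_Reals. eapply is_series_ext; [|exact HS]. intro n; simpl. rewrite term_eq; reflexivity. }
  unfold nbessel.
  pose proof (epsilon_spec (inhabits 0) (fun l => infinite_sum (nbessel_term mu x) l)
               (ex_intro _ _ HI)) as HE.
  apply is_series_Reals in HE, HI.
  apply is_series_unique in HE. apply is_series_unique in HI.
  rewrite <- HE. exact HI.
Qed.

Lemma Series_le_gen (a b : nat -> R) : ex_series a -> ex_series b ->
  (forall n, a n <= b n) -> Series a <= Series b.
Proof.
  intros Ha Hb H.
  assert (0 <= Series (fun n => b n - a n)).
  { assert (Series (fun n => 0 * a n) <= Series (fun n => b n - a n)).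
    { apply Series_le. intro n; specialize (H n); lra.
      apply (ex_series_minus b a Hb Ha). }
    rewrite Series_scal_l in H0. lra. }
  rewrite Series_minus in H0 by auto. lra.
Qed.

Lemma ex_scal c (a : nat -> R) : ex_series a -> ex_series (fun n => c * a n).
Proof. intro H. apply (ex_series_scal_l c a H). Qed.

Lemma ex_minus (a b : nat -> R) : ex_series a -> ex_series b -> ex_series (fun n => a n - b n).
Proof. intros. apply (ex_series_minus a b); auto. Qed.

Lemma ex_shift (a : nat -> R) : ex_series a -> ex_series (fun k => a (S k)).
Proof. intro H. apply (ex_series_incr_1 a). auto. Qed.

Lemma ex_shift2 (a : nat -> R) : ex_series a -> ex_series (fun k => a (S (S k))).
Proof. intro H. apply (ex_shift (fun k => a (S k))). apply ex_shift; auto. Qed.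

Lemma ex_shift3 (a : nat -> R) : ex_series a -> ex_series (fun k => a (S (S (S k)))).
Proof. intro H. apply (ex_shift2 (fun k => a (S k))). apply ex_shift; auto. Qed.

Lemma ex_shiftn (a : nat -> R) N : ex_series a -> ex_series (fun k => a (N + k)%nat).
Proof. intro H. apply (ex_series_incr_n a N). auto. Qed.

Lemma Series_nonneg (a : nat -> R) : ex_series a -> (forall n, 0 <= a n) -> 0 <= Series a.
Proof.
  intros Ha H.
  assert (Series (fun n => 0 * a n) <= Series a).
  { apply Series_le; auto. intro n; specialize (H n); lra. }
  rewrite Series_scal_l in H0. lra.
Qed.

Lemma ratio_le nu n : -1 < nu -> (1 <= n)%nat ->
  (nu + 1) / (nu + 1 + INR n) <= (nu + 1) / (nu + 2).
Proof.
  intros H Hn. apply le_INR in Hn. simpl in Hn.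
  unfold Rdiv. apply Rmult_le_compat_l. lra.
  apply Rinv_le_contravar; lra.
Qed.

Lemma ratio_lt nu n : -1 < nu -> (2 <= n)%nat ->
  (nu + 1) / (nu + 1 + INR n) < (nu + 1) / (nu + 2).
Proof.
  intros H Hn. apply le_INR in Hn. simpl in Hn.
  unfold Rdiv. apply Rmult_lt_compat_l. lra.
  apply Rinv_lt_contravar. nra. lra.
Qed.

Section Facts.
Variable nu y : R.
Hypothesis Hnu : -1 < nu.
Hypothesis Hy : 0 < y.
Let a n := cf nu n * y ^ n.
Let b n := cf (nu + 1) n * y ^ n.
Let c := (nu + 1) / (nu + 2).

Lemma exa : ex_series a. Proof. apply ex_ser; auto. Qed.
Lemma exb : ex_series b. Proof. apply ex_ser; auto; lra. Qed.

Lemma a_pos n : 0 < a n.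
Proof. unfold a. apply Rmult_lt_0_compat. apply cf_pos; auto. apply pow_lt; auto. Qed.
Lemma b_pos n : 0 < b n.
Proof. unfold b. apply Rmult_lt_0_compat. apply cf_pos; lra. apply pow_lt; auto. Qed.

Lemma b_eq n : b n = a n * ((nu + 1) / (nu + 1 + INR n)).
Proof. unfold a, b. rewrite cf_shift by auto. ring. Qed.

Lemma gt1_gen (f : nat -> R) : ex_series f -> (forall n, 0 < f n) -> f 0%nat = 1 -> 1 < Series f.
Proof.
  intros Hf Hp H0.
  rewrite Series_incr_1 by auto. rewrite Series_incr_1 by (apply ex_shift; auto).
  pose proof (Series_nonneg (fun k => f (S (S k)))) as HH.
  assert (0 <= Series (fun k => f (S (S k)))).
  { apply HH. apply ex_shift2; auto. intro; apply Rlt_le, Hp. }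
  pose proof (Hp 1%nat). lra.
Qed.

Lemma F1 : 1 < Series a.
Proof. apply gt1_gen. apply exa. apply a_pos. unfold a; rewrite cf_0; simpl; ring. Qed.
Lemma F2 : 1 < Series b.
Proof. apply gt1_gen. apply exb. apply b_pos. unfold b; rewrite cf_0; simpl; ring. Qed.

Lemma F3 : Series b - 1 < c * (Series a - 1).
Proof.
  set (d n := c * a n - b n).
  assert (exd : ex_series d) by (apply ex_minus; [apply ex_scal, exa| apply exb]).
  assert (Series d = c * Series a - Series b).
  { unfold d. rewrite Series_minus by (try apply ex_scal; try apply exa; apply exb).
    rewrite Series_scal_l. reflexivity. }
  assert (dn : forall n, (1 <= n)%nat -> 0 <= d n).
  { intros n Hn. unfold d. rewrite b_eq. pose proof (a_pos n).
    pose proof (ratio_le nu n Hnu Hn). unfold c. nra. }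
  assert (d2 : 0 < d 2%nat).
  { unfold d. rewrite b_eq. pose proof (a_pos 2).
    pose proof (ratio_lt nu 2 Hnu (le_n _)). unfold c. nra. }
  assert (d0 : d 0%nat = c - 1).
  { unfold d, a, b. rewrite !cf_0. simpl. ring. }
  rewrite Series_incr_1 in H by auto.
  rewrite Series_incr_1 in H by (apply ex_shift; auto).
  rewrite Series_incr_1 in H by (apply ex_shift2; auto).
  assert (0 <= Series (fun k => d (S (S (S k))))).
  { apply Series_nonneg. apply ex_shift3; auto. intro; apply dn; lia. }
  pose proof (dn 1%nat (le_n _)). lra.
Qed.
End Facts.

Lemma NecP nu p : -1 < nu -> p < (nu + 1) / (nu + 2) ->
  exists y, 0 < y /\
    Series (fun n => cf (nu + 1) n * y ^ n) - 1 >= p * (Series (fun n => cf nu n * y ^ n) - 1).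
Proof.
  intros Hnu Hp.
  set (c := (nu + 1) / (nu + 2)) in *.
  assert (exK : ex_series (fun k => cf nu (S (S k)))).
  { apply (ex_series_ext (fun k => cf nu (S (S k)) * 1 ^ (S (S k)))).
    intro; rewrite pow1; apply Rmult_1_r. apply (ex_shift2 (fun n => cf nu n * 1 ^ n)). apply ex_ser; lra. }
  set (K := Series (fun k => cf nu (S (S k)))).
  assert (K0 : 0 <= K) by (apply Series_nonneg; auto; intro; apply Rlt_le, cf_pos; auto).
  set (al := cf nu 1).
  assert (al0 : 0 < al) by (apply cf_pos; auto).
  assert (Hz : 0 < (c - p) * al / (2 * (Rabs p * K + 1))).
  { apply Rdiv_lt_0_compat. apply Rmult_lt_0_compat; lra.
    pose proof (Rabs_pos p). nra. }
  set (y := Rmin 1 ((c - p) * al / (2 * (Rabs p * K + 1)))).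
  assert (y0 : 0 < y) by (unfold y; apply Rmin_glb_lt; lra).
  assert (y1 : y <= 1) by apply Rmin_l.
  assert (y2 : y <= (c - p) * al / (2 * (Rabs p * K + 1))) by apply Rmin_r.
  exists y. split; auto.
  set (a n := cf nu n * y ^ n). set (b n := cf (nu + 1) n * y ^ n).
  assert (exa : ex_series a) by (apply ex_ser; auto).
  assert (exb : ex_series b) by (apply ex_ser; auto; lra).
  set (e n := p * a n - b n).
  assert (exe : ex_series e) by (apply ex_minus; [apply ex_scal; auto| auto]).
  assert (HS : Series e = p * Series a - Series b).
  { unfold e. rewrite Series_minus by (try apply ex_scal; auto). rewrite Series_scal_l. reflexivity. }
  assert (e0 : e 0%nat = p - 1) by (unfold e, a, b; rewrite !cf_0; simpl; ring).
  assert (e1 : e 1%nat = (p - c) * al * y).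
  { unfold e, b. rewrite cf_shift by auto. unfold a, al, c. simpl INR.
    replace (nu + 1 + 1) with (nu + 2) by ring. simpl. ring. }
  assert (ee : forall k, e (S (S k)) <= Rabs p * y ^ 2 * cf nu (S (S k))).
  { intro k. unfold e.
    assert (Hb : 0 < b (S (S k))) by (unfold b; apply Rmult_lt_0_compat; [apply cf_pos; lra| apply pow_lt; lra]).
    pose proof (cf_pos nu (S (S k)) Hnu).
    assert (0 <= y ^ k <= 1).
    { split. apply pow_le; lra. rewrite <- (pow1 k). apply pow_incr; lra. }
    unfold a. replace (y ^ S (S k)) with (y ^ 2 * y ^ k) by (simpl; ring).
    assert (p * (cf nu (S (S k)) * (y ^ 2 * y ^ k)) <= Rabs p * (cf nu (S (S k)) * (y ^ 2 * y ^ k))).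
    { apply Rmult_le_compat_r. apply Rmult_le_pos. lra. apply Rmult_le_pos. apply pow_le; lra. lra.
      apply Rle_abs. }
    assert (Rabs p * (cf nu (S (S k)) * (y ^ 2 * y ^ k)) <= Rabs p * y ^ 2 * cf nu (S (S k))).
    { pose proof (Rabs_pos p). pose proof (pow_le y 2 ltac:(lra)).
      replace (Rabs p * y ^ 2 * cf nu (S (S k))) with (Rabs p * (cf nu (S (S k)) * (y ^ 2 * 1))) by ring.
      apply Rmult_le_compat_l; auto. apply Rmult_le_compat_l; [lra|]. apply Rmult_le_compat_l; lra. }
    lra. }
  assert (HT : Series (fun k => e (S (S k))) <= Rabs p * y ^ 2 * K).
  { unfold K. rewrite <- Series_scal_l. apply Series_le_gen; auto.
    apply ex_shift2; auto. apply ex_scal; auto. }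
  rewrite Series_incr_1 in HS by auto.
  rewrite Series_incr_1 in HS by (apply ex_shift; auto).
  assert (Rabs p * y * K <= (c - p) * al / 2).
  { pose proof (Rabs_pos p).
    assert ((Rabs p * K + 1) * y <= (c - p) * al / 2).
    { apply Rmult_le_reg_r with (/ (Rabs p * K + 1)). apply Rinv_0_lt_compat; nra.
      replace ((Rabs p * K + 1) * y * / (Rabs p * K + 1)) with y by (field; nra).
      replace ((c - p) * al / 2 * / (Rabs p * K + 1)) with ((c - p) * al / (2 * (Rabs p * K + 1))) by (field; nra).
      auto. }
    nra. }
  assert (y * ((p - c) * al + Rabs p * y * K) < 0).
  { assert (Hn : (p - c) * al + Rabs p * y * K < 0) by nra. nra. }
  fold a b. simpl pow in HT. nra.
Qed.

Lemma sum_pow_bound (h : nat -> R) y m : 1 <= y -> (forall n, 0 <= h n) ->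
  sum_f_R0 (fun n => h n * y ^ n) m <= sum_f_R0 h m * y ^ m.
Proof.
  intros Hy Hh. induction m as [|m IH]; simpl. lra.
  assert (0 <= sum_f_R0 h m).
  { clear IH. induction m; simpl. apply Hh. pose proof (Hh (S m)); lra. }
  assert (y ^ m <= y * y ^ m).
  { pose proof (pow_le y m ltac:(lra)). nra. }
  nra.
Qed.

Lemma nat_big r : exists N : nat, r < INR N.
Proof.
  destruct (archimed (Rabs r)) as [H _].
  assert (0 < IZR (up (Rabs r))) by (pose proof (Rabs_pos r); lra).
  apply lt_0_IZR in H0.
  exists (Z.to_nat (up (Rabs r))). rewrite INR_IZR_INZ, Z2Nat.id by lia.
  pose proof (Rle_abs r). lra.
Qed.

Lemma NecQ nu q : -1 < nu -> 0 < q ->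
  exists y, 0 < y /\
    Series (fun n => cf (nu + 1) n * y ^ n) - 1 <= q * (Series (fun n => cf nu n * y ^ n) - 1).
Proof.
  intros Hnu Hq.
  destruct (nat_big (2 * (nu + 1) / q)) as [N' HN'].
  set (g n := (nu + 1) / (nu + 1 + INR n) - q).
  set (h n := Rmax (cf nu n * g n) 0).
  set (S0 := sum_f_R0 h N').
  set (al := cf nu (S N')).
  assert (al0 : 0 < al) by (apply cf_pos; auto).
  set (y := 1 + 2 * (S0 + Rabs (1 - q)) / (q * al)).
  assert (S00 : 0 <= S0).
  { unfold S0. clear. induction N'; simpl. apply Rmax_r. pose proof (Rmax_r (cf nu (S N') * g (S N')) 0).
    unfold h at 2. lra. }
  assert (y1 : 1 <= y).
  { unfold y. assert (0 <= 2 * (S0 + Rabs (1 - q)) / (q * al)).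
    { apply Rmult_le_pos. pose proof (Rabs_pos (1-q)); lra. apply Rlt_le, Rinv_0_lt_compat. nra. }
    lra. }
  assert (y0 : 0 < y) by lra.
  exists y. split; auto.
  set (a n := cf nu n * y ^ n). set (b n := cf (nu + 1) n * y ^ n).
  assert (exa : ex_series a) by (apply ex_ser; auto).
  assert (exb : ex_series b) by (apply ex_ser; auto; lra).
  set (f n := b n - q * a n).
  assert (exf : ex_series f) by (apply ex_minus; [auto| apply ex_scal; auto]).
  assert (HS : Series f = Series b - q * Series a).
  { unfold f. rewrite Series_minus by (try apply ex_scal; auto). rewrite Series_scal_l. reflexivity. }
  assert (fe : forall n, f n = cf nu n * g n * y ^ n).
  { intro n. unfold f, b, a, g. rewrite cf_shift by auto. ring. }
  assert (ftail : forall m, (S N' <= m)%nat -> f m <= - (q / 2) * a m).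
  { intros m Hm. rewrite fe. unfold a.
    apply le_INR in Hm. rewrite S_INR in Hm.
    assert (Hd : 0 < nu + 1 + INR m) by (pose proof (pos_INR m); lra).
    assert (E : (nu + 1) / (nu + 1 + INR m) * (nu + 1 + INR m) = nu + 1) by (field; lra).
    assert (q * INR m > 2 * (nu + 1)).
    { assert (2 * (nu + 1) / q * q = 2 * (nu + 1)) by (field; lra). nra. }
    assert (g m <= - (q / 2)).
    { unfold g. assert ((nu + 1) / (nu + 1 + INR m) <= q / 2) by nra. lra. }
    pose proof (cf_pos nu m Hnu). pose proof (pow_lt y m y0).
    assert (0 < cf nu m * y ^ m) by nra. nra. }
  rewrite (Series_incr_n f (S N')) in HS by (auto; lia).
  simpl pred in HS.
  assert (exT : ex_series (fun k => f (S N' + k)%nat)) by (apply ex_shiftn; auto).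
  rewrite Series_incr_1 in HS by auto.
  rewrite Nat.add_0_r in HS.
  assert (HT : Series (fun k => f (S N' + S k)%nat) <= 0).
  { assert (Series (fun k => 0 * f (S N' + S k)%nat) >= Series (fun k => f (S N' + S k)%nat)).
    { apply Rle_ge, Series_le_gen.
      apply (ex_shift (fun k => f (S N' + k)%nat)); auto.
      apply ex_scal. apply (ex_shift (fun k => f (S N' + k)%nat)); auto.
      intro k. pose proof (ftail (S N' + S k)%nat ltac:(lia)).
      assert (0 < a (S N' + S k)%nat) by (unfold a; apply Rmult_lt_0_compat; [apply cf_pos; auto|apply pow_lt; auto]).
      nra. }
    rewrite Series_scal_l in H. lra. }
  assert (HF : sum_f_R0 f N' <= S0 * y ^ N').
  { apply Rle_trans with (sum_f_R0 (fun n => h n * y ^ n) N').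
    apply sum_Rle. intros n _. rewrite fe. unfold h.
    apply Rmult_le_compat_r. apply pow_le; lra. apply Rmax_l.
    apply sum_pow_bound; auto. intro; apply Rmax_r. }
  assert (Hfn : f (S N') <= - (q / 2) * al * y ^ N' * y).
  { pose proof (ftail (S N') (le_n _)). unfold a in H. fold al in H. simpl in H. lra. }
  assert (Hyal : q / 2 * al * y = q / 2 * al + S0 + Rabs (1 - q)).
  { unfold y. field. lra. }
  assert (Hyn : 1 <= y ^ N') by (apply pow_R1_Rle; auto).
  assert (Hneg : S0 - q / 2 * al * y < - Rabs (1 - q)).
  { rewrite Hyal. nra. }
  assert (y ^ N' * (S0 - q / 2 * al * y) <= S0 - q / 2 * al * y).
  { pose proof (Rabs_pos (1 - q)). nra. }
  pose proof (Rle_abs (1 - q)). pose proof (Rabs_pos (1-q)).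
  assert (H2 : - Rabs (1 - q) <= 1 - q).
  { pose proof (Rle_abs (-(1-q))) as H3. rewrite Rabs_Ropp in H3. lra. }
  assert (H4 : S0 * y ^ N' + - (q / 2) * al * y ^ N' * y = y ^ N' * (S0 - q / 2 * al * y)) by ring.
  fold a b. lra.
Qed.

Lemma reform A B p : 0 < B ->
  ((1 - p) * / B + p * (A / B) > 1 <-> 1 + p * (A - 1) > B) /\
  (1 > (1 - p) * / B + p * (A / B) <-> 1 + p * (A - 1) < B).
Proof.
  intro HB.
  assert (E : (1 - p) * / B + p * (A / B) = (1 + p * (A - 1)) / B) by (field; lra).
  rewrite E. set (t := (1 + p * (A - 1)) / B).
  assert (Et : 1 + p * (A - 1) = t * B) by (unfold t; field; lra).
  rewrite Et. split; split; intro; nra.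
Qed.

Theorem theorem4p2 (nu p q : R) (hnu : -1 < nu) :
  (forall x : R, 0 < x ->
     (1 - p) * / nbessel (nu + 1) x + p * (nbessel nu x / nbessel (nu + 1) x) > 1 /\
     1 > (1 - q) * / nbessel (nu + 1) x + q * (nbessel nu x / nbessel (nu + 1) x))
  <-> (p >= (nu + 1) / (nu + 2) /\ q <= 0).
Proof.
  assert (key : forall x, 0 < x ->
    nbessel nu x = Series (fun n => cf nu n * (x ^ 2) ^ n) /\
    nbessel (nu + 1) x = Series (fun n => cf (nu + 1) n * (x ^ 2) ^ n)).
  { intros x Hx. split; apply nbessel_eq; auto; lra. }
  assert (sq : forall y, 0 < y -> 0 < sqrt y /\ sqrt y ^ 2 = y).
  { intros y Hy. split. apply sqrt_lt_R0; auto. simpl. rewrite Rmult_1_r. apply sqrt_sqrt; lra. }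
  split.
  - intro H. split.
    + apply Rnot_lt_ge. intro Hp.
      destruct (NecP nu p hnu Hp) as [y [Hy Hb]].
      destruct (sq y Hy) as [Hx Ex].
      destruct (H _ Hx) as [H1 _].
      destruct (key _ Hx) as [EA EB]. rewrite EA, EB, Ex in H1.
      pose proof (F2 nu y hnu Hy) as HB.
      assert (HB0 : 0 < Series (fun n => cf (nu + 1) n * y ^ n)) by lra.
      apply (proj1 (reform _ _ p HB0)) in H1. lra.
    + apply Rnot_lt_le. intro Hq.
      destruct (NecQ nu q hnu Hq) as [y [Hy Hb]].
      destruct (sq y Hy) as [Hx Ex].
      destruct (H _ Hx) as [_ H1].
      destruct (key _ Hx) as [EA EB]. rewrite EA, EB, Ex in H1.
      pose proof (F2 nu y hnu Hy) as HB.
      assert (HB0 : 0 < Series (fun n => cf (nu + 1) n * y ^ n)) by lra.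
      apply (proj2 (reform _ _ q HB0)) in H1. lra.
  - intros [Hp Hq] x Hx.
    assert (Hy : 0 < x ^ 2) by (apply pow_lt; auto).
    destruct (key _ Hx) as [EA EB]. rewrite EA, EB.
    pose proof (F1 nu (x^2) hnu Hy). pose proof (F2 nu (x^2) hnu Hy).
    pose proof (F3 nu (x^2) hnu Hy).
    assert (HB0 : 0 < Series (fun n => cf (nu + 1) n * (x ^ 2) ^ n)) by lra.
    split.
    + apply (proj1 (reform _ _ p HB0)).
      set (c := (nu + 1) / (nu + 2)) in *. nra.
    + apply (proj2 (reform _ _ q HB0)). nra.
Qed.
Print Assumptions theorem4p2.
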